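(* Let $(P,\le,\mu,\gamma)$ be a preordered heap with target multiplication $\tau(a,b)=\gamma(\mu(\gamma a,\gamma b))$. For $a,x\in P$ define $a/x=\tau(a,\gamma x)$ and $x\backslash a=\tau(\gamma x,a)$. Then for all $a,x,y\in P$: $y\le a/x$ if and only if $x\le y\backslash a$.
   Context: A preordered heap is a structure $(P,\le,\mu,\gamma)$ where $(P,\le)$ is a preorder (reflexive and transitive relation); $\mu\colon P\times P\to P$ (source multiplication) is monotonic in both arguments; $\gamma\colon P\to P$ (involution) is antitone ($a\le b\Rightarrow \gamma b\le\gamma a$); and the following axioms hold: (A1) $\gamma(\gamma(a))=a$ for all $a$; (A2a) $\mu(a,\gamma(\mu(\gamma b,a)))\le b$ for all $a,b\in P$; (A2b) $\mu(\gamma(\mu(a,\gamma b)),a)\le b$ for all $a,b\in P$. *)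

(* Defs.v *)
Definition preordered_heap {P : Type} (le : P -> P -> Prop)
  (mu : P -> P -> P) (gamma : P -> P) : Prop :=
  (forall a, le a a) /\
  (forall a b c, le a b -> le b c -> le a c) /\
  (forall a a' b b', le a a' -> le b b' -> le (mu a b) (mu a' b')) /\
  (forall a b, le a b -> le (gamma b) (gamma a)) /\
  (* (A1) *)
  (forall a, gamma (gamma a) = a) /\
  (* (A2a) *)
  (forall a b, le (mu a (gamma (mu (gamma b) a))) b) /\
  (* (A2b) *)
  (forall a b, le (mu (gamma (mu a (gamma b))) a) b).

Definition tau {P : Type} (mu : P -> P -> P) (gamma : P -> P) (a b : P) : P :=
  gamma (mu (gamma a) (gamma b)).

Definition rdiv {P : Type} (mu : P -> P -> P) (gamma : P -> P) (a x : P) : P :=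
  tau mu gamma a (gamma x).

Definition ldiv {P : Type} (mu : P -> P -> P) (gamma : P -> P) (x a : P) : P :=
  tau mu gamma (gamma x) a.

(* Main.v *)
Require Import Defs.

Theorem mainTheorem2 (P : Type) (le : P -> P -> Prop) (mu : P -> P -> P)
  (gamma : P -> P) (H : preordered_heap le mu gamma) :
  forall a x y : P, le y (rdiv mu gamma a x) <-> le x (ldiv mu gamma y a).
Proof.
  destruct H as [Hr [Ht [Hm [Hg [A1 [A2a A2b]]]]]].
  intros a x y; unfold rdiv, ldiv, tau; rewrite !A1; split; intro Hy.
  - rewrite <- (A1 x). apply Hg.
    apply Ht with (b := mu (gamma (mu (gamma a) x)) (gamma a)).
    + apply Hm; [exact Hy | apply Hr].
    + pose proof (A2b (gamma a) (gamma x)) as K. rewrite A1 in K. exact K.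
  - rewrite <- (A1 y). apply Hg.
    apply Ht with (b := mu (gamma a) (gamma (mu y (gamma a)))).
    + apply Hm; [apply Hr | exact Hy].
    + pose proof (A2a (gamma a) (gamma y)) as K. rewrite A1 in K. exact K.
Qed.
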